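(* Let $E$ be a Fréchet space, let $(B_n)_{n\in\mathbb{N}}$ fix the topology in $E$ and $G:=\operatorname{span}(\bigcup_{n\in\mathbb{N}}B_n)$. Let $(T^{E}_{m},T^{\mathbb{K}}_{m})_{m\in\mathcal{M}}$ be a defining family for $(\mathcal{FV},E)$ and a strong, consistent family for $(\mathcal{FW},E)$, where $\mathcal{FV}(\Omega)$ is a Banach space with $\mathcal{V}=(\nu_{1,1,m})_{m\in M_1}$ whose closed unit ball $B_{\mathcal{FV}(\Omega)}$ is a compact subset of $\mathcal{FW}(\Omega)$, and let $U$ be a set of uniqueness for $\mathcal{FV}(\Omega)$. Then the map \[ R_{U,G}\colon S\bigl(\{u\in\mathcal{FW}(\Omega)\varepsilon E\;|\;u(B_{\mathcal{FV}(\Omega)}^{\circ\mathcal{FW}(\Omega)'})\text{ is bounded in }E\}\bigr)\to\mathcal{FV}_G(U,E)_{sb},\quad f\mapsto(T^E_m(f)(x))_{(m,x)\in U}, \] is surjective.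
   Context: $\mathbb{K}\in\{\mathbb{R},\mathbb{C}\}$; $E$ has a directed fundamental system of seminorms $(p_\alpha)_{\alpha\in\mathfrak{A}}$ (for $E=\mathbb{K}$: $\{|\cdot|\}$), dual $E'$, $E'_b$ with the strong topology. An increasing sequence $(B_n)_{n\in\mathbb{N}}$ of bounded subsets of $E'_b$ fixes the topology in $E$ if the polars $(B_n^\circ)_{n\in\mathbb{N}}$ form a fundamental system of zero neighbourhoods of $E$. Weighted function spaces: given non-empty sets $\Omega,J,L$, non-empty sets $(M_l)_{l\in L}$ and a family $\mathcal{V}=((\nu_{j,l,m})_{m\in M_l})_{j\in J,l\in L}$ of functions $\nu_{j,l,m}\colon\Omega\to[0,\infty)$ such that for all $x$, $l$ there is $j$ with $\nu_{j,l,m}(x)>0$ for all $m\in M_l$; $\mathcal{M}_{\mathrm{top}}:=\bigcup_lM_l$, sets $\mathcal{M}_0,\mathcal{M}_r$, the three pairwise disjoint, $\mathcal{M}$ their union; non-empty sets $(\omega_m)_{m\in\mathcal{M}}$ with $\Omega\subset\omega_m$ for $m\in\mathcal{M}_{\mathrm{top}}$; for $F\in\{E,\mathbb{K}\}$ linear maps $T^F_m\colon\operatorname{dom}T^F_m\subset F^\Omega\to F^{\omega_m}$. $\mathcal{FV}(\Omega,F)$ is the set of $f\in\bigcap_{m\in\mathcal{M}}\operatorname{dom}T^F_m\cap\bigcap_{m\in\mathcal{M}_0}\ker T^F_m$ with $|f|_{j,l,\alpha}:=\sup_{x\in\Omega,m\in M_l}p_\alpha(T^F_m(f)(x))\nu_{j,l,m}(x)<\infty$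 for all $j,l,\alpha$, with these seminorms; $\mathcal{FV}(\Omega):=\mathcal{FV}(\Omega,\mathbb{K})$; $T^F_{m,x}(f):=T^F_m(f)(x)$. A dom-space: seminorms directed and, in the scalar case, point evaluations $\delta_x$ continuous. If $\mathcal{FV}(\Omega)$, $\mathcal{FV}(\Omega,E)$ are dom-spaces built from the same data with operators $T^{\mathbb{K}}_m$ resp. $T^E_m$, $(T^E_m,T^{\mathbb{K}}_m)_{m\in\mathcal{M}}$ is a defining family for $(\mathcal{FV},E)$. $\mathcal{FW}(\Omega)$, $\mathcal{FW}(\Omega,E)$ are spaces of the same type built from the same $\Omega$, $\mathcal{M}$, $\omega_m$ and operators but another family of weights $\mathcal{W}$. $\mathcal{FW}(\Omega)\varepsilon E$: continuous linear maps $\mathcal{FW}(\Omega)'_\kappa\to E$ ($\kappa$: uniform convergence on absolutely convex compact sets), $S(u)(x):=u(\delta_x)$. Consistent for $(\mathcal{FW},E)$: for all $u\in\mathcal{FW}(\Omega)\varepsilon E$, $m\in\mathcal{M}$, $x\in\omega_m$: $S(u)\in\operatorname{dom}T^E_m$, $T^{\mathbb{K}}_{m,x}|_{\mathcal{FW}(\Omega)}\in\mathcal{FW}(\Omega)'$ and $T^E_m(S(u))(x)=u(T^{\mathbb{K}}_{m,x})$; strong for $(\mathcal{FW},E)$: for all $e'\in E'$, $f\in\mathcal{FW}(\Omega,E)$, $m$: $e'\circ f\in\operatorname{dom}T^{\mathbb{K}}_m$ and $T^{\mathbb{K}}_m(e'\circ f)=e'\circ T^E_m(f)$ on $\omega_m$.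 $B_{\mathcal{FV}(\Omega)}^{\circ\mathcal{FW}(\Omega)'}:=\{y'\in\mathcal{FW}(\Omega)':|y'(z)|\le1\ \forall z\in B_{\mathcal{FV}(\Omega)}\}$. $\mathcal{V}=(\nu_{1,1,m})_{m\in M_1}$ means $J=L=\{1\}$. $U\subset\bigcup_m\{m\}\times\omega_m$ is a set of uniqueness for $\mathcal{FV}(\Omega)$ if $T^{\mathbb{K}}_{m,x}\in\mathcal{FV}(\Omega)'$ for $(m,x)\in U$ and $f\in\mathcal{FV}(\Omega)$ with $T^{\mathbb{K}}_m(f)(x)=0$ for all $(m,x)\in U$ is $0$. $\mathcal{FV}_G(U,E)$ is the set of $f\colon U\to E$ such that for each $e'\in G$ there is a (unique) $f_{e'}\in\mathcal{FV}(\Omega)$ with $T^{\mathbb{K}}_m(f_{e'})(x)=e'(f(m,x))$ for all $(m,x)\in U$; $\mathcal{FV}_G(U,E)_{sb}$ is the set of such $f$ for which $\{f_{e'}:e'\in B_n\}$ is bounded in $\mathcal{FV}(\Omega)$ for every $n\in\mathbb{N}$. Under the hypotheses $R_{U,G}$ takes values in $\mathcal{FV}_G(U,E)_{sb}$. *)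

(* Defs.v *)
(* All locally convex notions are written out
   explicitly through (families of) seminorms, in "sup <= eps" form. *)
From mathcomp Require Import all_boot all_order all_algebra.
From mathcomp Require Import reals complex.
From mathcomp Require Import classical_sets.
From Stdlib Require List.
Set Implicit Arguments.
Unset Strict Implicit.
Unset Printing Implicit Defensive.
Import Order.TTheory GRing.Theory Num.Theory.
Local Open Scope ring_scope.
Local Open Scope classical_set_scope.

Definition Kfield (R : realType) (b : bool) : numFieldType :=
  if b then (R : numFieldType) else (R[i] : numFieldType).

Section LCS.
Variable K : numFieldType.

Variables (E : lmodType K) (A : Type) (p : A -> E -> K).

Definition is_seminorm (q : E -> K) : Prop :=
  [/\ forall x, 0 <= q x,
      forall x y, q (x + y) <= q x + q y &
      forall (k : K) x, q (k *: x) = `|k| * q x].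

Definition directed_seminorms : Prop :=
  forall a b : A, exists (c : A) (C : K), 0 < C /\
    forall x, p a x <= C * p c x /\ p b x <= C * p c x.

(* Frechet space: Hausdorff, metrizable (countable fundamental subsystem),
   (sequentially) complete locally convex space *)
Definition frechet : Prop :=
  [/\ forall a, is_seminorm (p a),
      directed_seminorms,
      forall x, (forall a, p a x = 0) -> x = 0,
      exists s : nat -> A, forall a, exists (n : nat) (C : K),
          forall x, p a x <= C * p (s n) x &
      forall u : nat -> E,
        (forall a (e : K), 0 < e -> exists N : nat, forall n k : nat,
            (N <= n)%N -> (N <= k)%N -> p a (u n - u k) <= e) ->
        exists l : E, forall a (e : K), 0 < e -> exists N : nat,
            forall n : nat, (N <= n)%N -> p a (u n - l) <= e].

Definition in_dual (e : E -> K) : Prop :=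
  (forall (k : K) x y, e (k *: x + y) = k * e x + e y) /\
  exists (a : A) (C : K), forall x, `|e x| <= C * p a x.

Definition bounded_in_E (D : set E) : Prop :=
  forall a, exists C : K, forall x, D x -> p a x <= C.

(* bounded subsets of E'_b (strong topology: uniform convergence on bounded sets) *)
Definition bounded_in_Eb (B : set (E -> K)) : Prop :=
  B `<=` in_dual /\
  forall D : set E, bounded_in_E D ->
    exists C : K, forall e x, B e -> D x -> `|e x| <= C.

Definition polarE (B : set (E -> K)) : set E :=
  [set x | forall e, B e -> `|e x| <= 1].

Definition fixes_topology (B : nat -> set (E -> K)) : Prop :=
  [/\ forall n, B n `<=` B n.+1,
      forall n, bounded_in_Eb (B n),
      forall n, exists (a : A) (e : K), 0 < e /\
          [set x | p a x <= e] `<=` polarE (B n) &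
      forall a (e : K), 0 < e -> exists n, polarE (B n) `<=` [set x | p a x <= e]].

Definition span_union (B : nat -> set (E -> K)) : set (E -> K) :=
  [set e | exists s : seq (K * (E -> K)),
     (forall c, List.In c s -> exists n, B n c.2) /\
     e = (fun x => \sum_(c <- s) c.1 * c.2 x)].

End LCS.

Section Weighted.
Variable K : numFieldType.
(* Omega, the index set \mathcal{M} (as a type), the sets omega_m (as types)
   and the inclusions Omega \subset omega_m (used for m in M_top only). *)
Variables (Om M : Type) (om : M -> Type) (emb : forall m, Om -> om m).

Section Space.
(* F = E or F = K; seminorms q i on F, i : I *)
Variables (F : lmodType K) (I : Type) (q : I -> F -> K).
Variables (dom : M -> set (Om -> F)) (T : forall m, (Om -> F) -> om m -> F).
Variables (J L : Type) (Ml : L -> set M) (M0 : set M) (nu : J -> L -> M -> Om -> K).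

Definition lincomb (k : K) (f g : Om -> F) : Om -> F := fun x => k *: f x + g x.

Definition linear_ops : Prop :=
  forall m, dom m (fun _ => 0) /\
    forall (k : K) f g, dom m f -> dom m g ->
      dom m (lincomb k f g) /\
      @T m (lincomb k f g) = (fun y => k *: @T m f y + @T m g y).

Definition wsn_le (j : J) (l : L) (i : I) (f : Om -> F) (e : K) : Prop :=
  forall m x, Ml l m -> q i (@T m f (emb m x)) * nu j l m x <= e.

Definition FVsp : set (Om -> F) :=
  [set f | [/\ forall m, dom m f,
              forall m, M0 m -> forall y, @T m f y = 0 &
              forall j l i, exists C : K, wsn_le j l i f C]].

Definition wsn_directed : Prop :=
  forall (j1 : J) (l1 : L) (i1 : I) (j2 : J) (l2 : L) (i2 : I),
  exists (j3 : J) (l3 : L) (i3 : I) (C : K), 0 < C /\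
    forall f e, FVsp f -> wsn_le j3 l3 i3 f e ->
      wsn_le j1 l1 i1 f (C * e) /\ wsn_le j2 l2 i2 f (C * e).
End Space.

Arguments linear_ops : clear implicits.

Definition weights_ok (J L : Type) (Ml : L -> set M) (M0 : set M)
    (nu : J -> L -> M -> Om -> K) : Prop :=
  [/\ inhabited J /\ inhabited L,
      forall l, exists m, Ml l m,
      forall j l m x, Ml l m -> 0 <= nu j l m x,
      forall x l, exists j, forall m, Ml l m -> 0 < nu j l m x &
      forall l m, Ml l m -> ~ M0 m /\ injective (emb m)].

Definition absK (_ : unit) (k : K^o) : K := `|k|.

Section Scalar.
Variables (domK : M -> set (Om -> K^o)) (TK : forall m, (Om -> K^o) -> om m -> K^o).
Variables (J L : Type) (Ml : L -> set M) (M0 : set M) (nu : J -> L -> M -> Om -> K).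

Definition FVs : set (Om -> K^o) := FVsp absK domK TK Ml M0 nu.
Definition sle (j : J) (l : L) (f : Om -> K^o) (e : K) : Prop :=
  wsn_le absK TK Ml nu j l tt f e.

Definition in_FVdual (y : (Om -> K^o) -> K) : Prop :=
  (forall (k : K) f g, FVs f -> FVs g -> y (lincomb k f g) = k * y f + y g) /\
  exists (j : J) (l : L) (d : K), 0 < d /\
    forall f, FVs f -> sle j l f d -> `|y f| <= 1.

Definition dom_space_K : Prop :=
  wsn_directed absK domK TK Ml M0 nu /\
  forall x : Om, in_FVdual (fun f => f x).

Definition open_FV (O : set (Om -> K^o)) : Prop :=
  O `<=` FVs /\
  forall f, O f -> exists (j : J) (l : L) (d : K), 0 < d /\
    forall g, FVs g -> sle j l (fun x => g x - f x) d -> O g.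

Definition compact_FV (C : set (Om -> K^o)) : Prop :=
  C `<=` FVs /\
  forall Os : set (set (Om -> K^o)), (forall O, Os O -> open_FV O) ->
    C `<=` \bigcup_(O in Os) O ->
    exists s : seq (set (Om -> K^o)),
      (forall O, List.In O s -> Os O) /\
      forall f, C f -> exists O, List.In O s /\ O f.

Definition absconvex (C : set (Om -> K^o)) : Prop :=
  forall (a b : K) f g, `|a| + `|b| <= 1 -> C f -> C g ->
    C (fun x => a * f x + b * g x).

Definition banach_FV (jn : J) (ln : L) : Prop :=
  (forall f, FVs f -> (forall e : K, 0 < e -> sle jn ln f e) -> f = (fun _ => 0)) /\
  forall u : nat -> (Om -> K^o), (forall n, FVs (u n)) ->
    (forall e : K, 0 < e -> exists N : nat, forall n k : nat,
        (N <= n)%N -> (N <= k)%N -> sle jn ln (fun x => u n x - u k x) e) ->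
    exists f, FVs f /\ forall e : K, 0 < e -> exists N : nat,
        forall n : nat, (N <= n)%N -> sle jn ln (fun x => u n x - f x) e.

Definition uniqueness_set (U : set {m : M & om m}) : Prop :=
  (forall m (x : om m), U (existT _ m x) -> in_FVdual (fun f => @TK m f x)) /\
  forall f, FVs f -> (forall m (x : om m), U (existT _ m x) -> @TK m f x = 0) ->
    f = (fun _ => 0).

Variables (E : lmodType K) (A : Type) (p : A -> E -> K).

(* u : FV(Omega)'_kappa -> E linear and continuous; kappa = topology of
   uniform convergence on absolutely convex compact subsets of FV(Omega) *)
Definition eps_prod (u : ((Om -> K^o) -> K) -> E) : Prop :=
  (forall (k : K) y1 y2, in_FVdual y1 -> in_FVdual y2 ->
     u (fun f => k * y1 f + y2 f) = k *: u y1 + u y2) /\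
  forall a : A, exists C : set (Om -> K^o),
    [/\ compact_FV C, absconvex C &
        forall y, in_FVdual y -> (forall f, C f -> `|y f| <= 1) -> p a (u y) <= 1].

Definition Smap (u : ((Om -> K^o) -> K) -> E) : Om -> E := fun x => u (fun f => f x).

End Scalar.

Arguments FVs : clear implicits.
Arguments in_FVdual : clear implicits.
Arguments dom_space_K : clear implicits.
Arguments compact_FV : clear implicits.
Arguments banach_FV : clear implicits.
Arguments uniqueness_set : clear implicits.
Arguments eps_prod : clear implicits.


End Weighted.

Section Corollary.
Variable K : numFieldType.
Variables (Om M : Type) (om : M -> Type) (emb : forall m, Om -> om m).
Variables (E : lmodType K) (A : Type) (p : A -> E -> K).
Variables (domE : M -> set (Om -> E)) (TE : forall m, (Om -> E) -> om m -> E).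
Variables (domK : M -> set (Om -> K^o)) (TK : forall m, (Om -> K^o) -> om m -> K^o).

Definition consistent_for (J L : Type) (Ml : L -> set M) (M0 : set M)
    (nu : J -> L -> M -> Om -> K) : Prop :=
  forall u, eps_prod emb domK TK Ml M0 nu p u ->
    forall m (x : om m),
      [/\ domE m (Smap u),
          in_FVdual emb domK TK Ml M0 nu (fun f => @TK m f x) &
          @TE m (Smap u) x = u (fun f => @TK m f x)].

Definition strong_for (J L : Type) (Ml : L -> set M) (M0 : set M)
    (nu : J -> L -> M -> Om -> K) : Prop :=
  forall e, in_dual p e ->
  forall f, FVsp emb p domE TE Ml M0 nu f ->
  forall m, domK m (fun x => e (f x) : K^o) /\
    forall y : om m, @TK m (fun x => e (f x) : K^o) y = e (@TE m f y).

(* FV(Omega) with V = (nu_{1,1,m})_{m in M_1}, i.e. J = L = unit, M_1 = MV *)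
Variables (MV M0V : set M) (nuV : M -> Om -> K).
Definition FV1 : set (Om -> K^o) :=
  FVs emb domK TK (fun _ : unit => MV) M0V (fun _ _ : unit => nuV).
Definition normV_le (f : Om -> K^o) (e : K) : Prop :=
  sle emb TK (fun _ : unit => MV) (fun _ _ : unit => nuV) tt tt f e.
Definition ballV : set (Om -> K^o) := [set f | FV1 f /\ normV_le f 1].

Definition polar_ballV (J L : Type) (Ml : L -> set M) (M0 : set M)
    (nu : J -> L -> M -> Om -> K) : set ((Om -> K^o) -> K) :=
  [set y | in_FVdual emb domK TK Ml M0 nu y /\ forall f, ballV f -> `|y f| <= 1].

(* FV_G(U, E)_{sb}; functions on U are represented as functions on the
   sigma type sum_m om m of which only the values on U matter *)
Definition FVG_sb (U : set {m : M & om m}) (G : set (E -> K))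
    (B : nat -> set (E -> K)) (g : {m : M & om m} -> E) : Prop :=
  (forall e, G e -> exists f, FV1 f /\
     forall m (x : om m), U (existT _ m x) -> @TK m f x = e (g (existT _ m x))) /\
  forall n : nat, exists C : K, forall e f, B n e -> FV1 f ->
     (forall m (x : om m), U (existT _ m x) -> @TK m f x = e (g (existT _ m x))) ->
     normV_le f C.
End Corollary.

(* Main.v *)
Require Import Defs.
From mathcomp Require Import all_boot all_order all_algebra.
From mathcomp Require Import reals complex.
From mathcomp Require Import classical_sets boolp.
From mathcomp Require Import ring lra.
Set Implicit Arguments.
Unset Strict Implicit.
Unset Printing Implicit Defensive.
Import Order.TTheory GRing.Theory Num.Theory.
Local Open Scope ring_scope.
Local Open Scope classical_set_scope.

Record KRax (R : realType) (K : numFieldType) := KRax_ {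
  rK : R -> K; reK : K -> R; iK : K;
  rKD : forall r s, rK (r + s) = rK r + rK s;
  rKM : forall r s, rK (r * s) = rK r * rK s;
  rK1 : rK 1 = 1;
  rKle : forall r s, (rK r <= rK s) = (r <= s);
  reKD : forall z w, reK (z + w) = reK z + reK w;
  reKZ : forall r z, reK (rK r * z) = r * reK z;
  reK1 : reK 1 = 1;
  reK_real : forall z, z \is Num.real -> rK (reK z) = z;
  reK_norm : forall z, reK z <= reK `|z|;
  rot : forall z, exists zeta : K, `|zeta| = 1 /\ zeta * z = `|z|;
  iK_ax : forall z, reK z = 0 -> reK (iK * z) = 0 -> z = 0 }.

Section KRlemmas.
Variables (R : realType) (K : numFieldType) (k : KRax R K).
Local Notation rK := (rK k).
Local Notation reK := (reK k).

Lemma rK0 : rK 0 = 0.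
Proof. by apply/eqP; have h := rKD k 0 0; rewrite addr0 in h; rewrite -(addrI _ (etrans (esym h) (esym (addr0 _)))). Qed.

Lemma rKN r : rK (- r) = - rK r.
Proof. by apply/eqP; rewrite -subr_eq0 opprK -rKD addNr rK0. Qed.

Lemma rKB r s : rK (r - s) = rK r - rK s.
Proof. by rewrite rKD rKN. Qed.

Lemma rK_inj : injective rK.
Proof. by move=> r s e; apply/le_anti; rewrite -!(rKle k) e lexx. Qed.

Lemma rKlt r s : (rK r < rK s) = (r < s).
Proof. by rewrite !lt_def rKle (inj_eq rK_inj). Qed.

Lemma rK_ge0 r : (0 <= rK r) = (0 <= r).
Proof. by rewrite -rK0 rKle. Qed.

Lemma rK_gt0 r : (0 < rK r) = (0 < r).
Proof. by rewrite -rK0 rKlt. Qed.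

Lemma rK_real r : rK r \is Num.real.
Proof.
by rewrite realE -rK0 !rKle le_total.
Qed.

Lemma reK_rK r : reK (rK r) = r.
Proof. by rewrite -[rK r]mulr1 reKZ reK1 mulr1. Qed.

Lemma reK0 : reK 0 = 0.
Proof. by rewrite -rK0 reK_rK. Qed.

Lemma reKN z : reK (- z) = - reK z.
Proof. by apply/eqP; rewrite -subr_eq0 opprK -reKD addNr reK0. Qed.

Lemma reKB z w : reK (z - w) = reK z - reK w.
Proof. by rewrite reKD reKN. Qed.

Lemma normrK r : `|rK r| = rK `|r|.
Proof.
case: (lerP 0 r) => h.
  by rewrite ger0_norm ?rK_ge0 // ger0_norm.
by rewrite ltr0_norm ?rK_gt0 ?ltr0_norm // -?rKN // -rK0 rKlt.
Qed.

Lemma rKn n : rK n%:R = n%:R.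
Proof. by elim: n => [|n IH]; rewrite ?rK0 // -addn1 !natrD rKD IH rK1. Qed.

Lemma real_leKr x r : x \is Num.real -> (x <= rK r) = (reK x <= r).
Proof. by move=> hx; rewrite -{1}(reK_real k hx) rKle. Qed.

Lemma real_leKl x r : x \is Num.real -> (rK r <= x) = (r <= reK x).
Proof. by move=> hx; rewrite -{1}(reK_real k hx) rKle. Qed.

Lemma real_ltKr x r : x \is Num.real -> (x < rK r) = (reK x < r).
Proof. by move=> hx; rewrite -{1}(reK_real k hx) rKlt. Qed.

Lemma real_ltKl x r : x \is Num.real -> (rK r < x) = (r < reK x).
Proof. by move=> hx; rewrite -{1}(reK_real k hx) rKlt. Qed.

Lemma reK_gt0 (x : K) : 0 < x -> 0 < reK x.
Proof. by move=> hx; rewrite -(real_ltKl _ (gtr0_real hx)) rK0. Qed.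

Lemma reK_ge0 (x : K) : 0 <= x -> 0 <= reK x.
Proof. by move=> hx; rewrite -(real_leKl _ (ger0_real hx)) rK0. Qed.

Lemma K_archi (x : K) : 0 <= x -> exists n : nat, x < n%:R.
Proof.
move=> hx; exists (Num.bound (reK x)).
by rewrite -rKn real_ltKr ?ger0_real // archi_boundP // reK_ge0.
Qed.

End KRlemmas.

Unset Implicit Arguments.

Section FS.
Context {K : numFieldType} {Om M : Type} {om : M -> Type} {emb : forall m, Om -> om m}
  {domK : M -> set (Om -> K^o)} {TK : forall m, (Om -> K^o) -> om m -> K^o}.
Hypothesis linK : linear_ops domK TK.
Context {J L : Type} {Ml : L -> set M} {M0 : set M} {nu : J -> L -> M -> Om -> K}.
Hypothesis nu_ge0 : forall j l m x, Ml l m -> 0 <= nu j l m x.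

Local Notation FVK := (FVs emb domK TK Ml M0 nu).
Local Notation sl := (sle emb TK Ml nu).

Lemma T0 (m : M) : @TK m (fun _ : Om => 0 : K^o) = (fun _ => 0 : K^o).
Proof.
have [d0 h] := linK m.
have [_ e] := h 1 (fun _ => 0) (fun _ => 0) d0 d0.
have E : lincomb 1 (fun _ : Om => 0 : K^o) (fun _ => 0) = (fun _ => 0 : K^o).
  by apply: funext => x; rewrite /lincomb scaler0 addr0.
rewrite E in e; apply: funext => y.
have := congr1 (fun F => F y) e => /= E2; rewrite scale1r in E2.
by apply: (@addrI _ (@TK m (fun _ => 0) y)); rewrite addr0 -E2.
Qed.

Lemma dom0 m : domK m (fun _ => 0).
Proof. by case: (linK m). Qed.

Lemma dom_lin m (c : K) f g : domK m f -> domK m g ->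
  domK m (lincomb c f g) /\
  @TK m (lincomb c f g) = (fun y => c * @TK m f y + @TK m g y).
Proof. by move=> hf hg; case: (linK m) => _ h; apply: h. Qed.

Lemma sl0 j l : sl j l (fun _ => 0) 0.
Proof. by move=> m x hm; rewrite /absK T0 normr0 mul0r. Qed.

Lemma sle_lin j l (c : K) f g c1 c2 : (forall m, domK m f) -> (forall m, domK m g) ->
  sl j l f c1 -> sl j l g c2 -> sl j l (lincomb c f g) (`|c| * c1 + c2).
Proof.
move=> df dg h1 h2 m x hm; rewrite /absK (dom_lin m c f g (df m) (dg m)).2.
have hn := nu_ge0 j l m x hm.
apply: (le_trans (ler_wpM2r hn (ler_normD _ _))).
rewrite mulrDl normrM -mulrA; apply: lerD; last exact: h2.
by apply: ler_wpM2l => //; exact: h1.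
Qed.

Lemma FV0 : FVK (fun _ => 0).
Proof.
split => [m|m _ y|j l i]; first exact: dom0.
  by rewrite T0.
by exists 0; case: i; exact: sl0.
Qed.

Lemma FV_lin (c : K) f g : FVK f -> FVK g -> FVK (lincomb c f g).
Proof.
move=> [df zf bf] [dg zg bg]; split => [m|m hm y|j l i].
- by case: (dom_lin m c f g (df m) (dg m)).
- by rewrite (dom_lin m c f g (df m) (dg m)).2 zf // zg // mulr0 addr0.
- case: i; have [c1 h1] := bf j l tt; have [c2 h2] := bg j l tt.
  by exists (`|c| * c1 + c2); exact: sle_lin.
Qed.

Lemma FV_dom (f : Om -> K^o) : FVK f -> forall m, domK m f.
Proof. by case. Qed.

Lemma sle_mono j l f e e' : sl j l f e -> e <= e' -> sl j l f e'.
Proof. by move=> h he m x hm; apply: le_trans (h m x hm) he. Qed.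

Lemma scale_eq (c : K) (f : Om -> K^o) :
  (fun x => c * f x) = lincomb c f (fun _ => 0).
Proof. by apply: funext => x; rewrite /lincomb addr0. Qed.

Lemma comb_eq (a b : K) (f g : Om -> K^o) :
  (fun x => a * f x + b * g x) = lincomb a f (lincomb b g (fun _ => 0)).
Proof. by apply: funext => x; rewrite /lincomb addr0. Qed.

Lemma sub_eq (f g : Om -> K^o) :
  (fun x => g x - f x) = lincomb (-1) f g.
Proof. by apply: funext => x; rewrite /lincomb scaleN1r addrC. Qed.

Lemma add_eq (f g : Om -> K^o) :
  (fun x => f x + g x) = lincomb 1 f g.
Proof. by apply: funext => x; rewrite /lincomb scale1r. Qed.

Lemma FV_scale (c : K) f : FVK f -> FVK (fun x => c * f x).
Proof. by move=> hf; rewrite scale_eq; apply: (FV_lin c f _ hf FV0). Qed.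

Lemma FV_comb (a b : K) f g : FVK f -> FVK g -> FVK (fun x => a * f x + b * g x).
Proof. by move=> hf hg; rewrite comb_eq; apply: (FV_lin a f _ hf (FV_lin b g _ hg FV0)). Qed.

Lemma FV_sub f g : FVK f -> FVK g -> FVK (fun x => g x - f x).
Proof. by move=> hf hg; rewrite sub_eq; apply: FV_lin. Qed.

Lemma FV_add f g : FVK f -> FVK g -> FVK (fun x => f x + g x).
Proof. by move=> hf hg; rewrite add_eq; apply: FV_lin. Qed.

Lemma sle_scale j l (c : K) f e : FVK f -> sl j l f e -> sl j l (fun x => c * f x) (`|c| * e).
Proof.
move=> hf h; rewrite scale_eq -[X in sl _ _ _ X]addr0.
exact: (sle_lin j l c f _ e 0 (FV_dom f hf) (FV_dom _ FV0) h (sl0 j l)).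
Qed.

Lemma sle_comb j l (a b : K) f g e1 e2 : FVK f -> FVK g -> sl j l f e1 -> sl j l g e2 ->
  sl j l (fun x => a * f x + b * g x) (`|a| * e1 + `|b| * e2).
Proof.
move=> hf hg h1 h2; rewrite comb_eq.
apply: (sle_lin j l a f _ e1 _ (FV_dom f hf) (FV_dom _ (FV_lin b g _ hg FV0)) h1 _).
rewrite -[X in sl _ _ _ X]addr0.
exact: (sle_lin j l b g _ e2 0 (FV_dom g hg) (FV_dom _ FV0) h2 (sl0 j l)).
Qed.

Lemma sle_sub j l f g e1 e2 : FVK f -> FVK g -> sl j l f e1 -> sl j l g e2 ->
  sl j l (fun x => g x - f x) (e1 + e2).
Proof.
move=> hf hg h1 h2; rewrite sub_eq.
have := sle_lin j l (-1) f g e1 e2 (FV_dom f hf) (FV_dom g hg) h1 h2.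
by rewrite normrN normr1 mul1r.
Qed.

Lemma sle_add j l f g e1 e2 : FVK f -> FVK g -> sl j l f e1 -> sl j l g e2 ->
  sl j l (fun x => f x + g x) (e1 + e2).
Proof.
move=> hf hg h1 h2; rewrite add_eq.
have := sle_lin j l 1 f g e1 e2 (FV_dom f hf) (FV_dom g hg) h1 h2.
by rewrite normr1 mul1r.
Qed.

Section Dual.
Context {y : (Om -> K^o) -> K}.
Hypothesis hy : in_FVdual emb domK TK Ml M0 nu y.

Lemma dual_lin (c : K) f g : FVK f -> FVK g -> y (lincomb c f g) = c * y f + y g.
Proof. by case: hy => h _; apply: h. Qed.

Lemma dual0 : y (fun _ => 0) = 0.
Proof.
have := dual_lin 1 _ _ FV0 FV0.
have -> : lincomb 1 (fun _ : Om => 0 : K^o) (fun _ => 0) = (fun _ => 0 : K^o).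
  by apply: funext => x; rewrite /lincomb scaler0 addr0.
rewrite mul1r => E2; by apply: (@addrI _ (y (fun _ => 0))); rewrite addr0 -E2.
Qed.

Lemma dual_scale (c : K) f : FVK f -> y (fun x => c * f x) = c * y f.
Proof. by move=> hf; rewrite scale_eq (dual_lin c f _ hf FV0) dual0 addr0. Qed.

Lemma dual_comb (a b : K) f g : FVK f -> FVK g ->
  y (fun x => a * f x + b * g x) = a * y f + b * y g.
Proof.
move=> hf hg; rewrite comb_eq (dual_lin a f _ hf (FV_lin b g _ hg FV0)).
by rewrite (dual_lin b g _ hg FV0) dual0 addr0.
Qed.

Lemma dual_sub f g : FVK f -> FVK g -> y (fun x => g x - f x) = y g - y f.
Proof. by move=> hf hg; rewrite sub_eq (dual_lin _ f g hf hg) mulN1r addrC. Qed.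

Lemma dual_add f g : FVK f -> FVK g -> y (fun x => f x + g x) = y f + y g.
Proof. by move=> hf hg; rewrite add_eq (dual_lin _ f g hf hg) mul1r. Qed.

Lemma dual_cont (eta : K) : 0 < eta -> exists j l (d : K), 0 < d /\
  forall h, FVK h -> sl j l h d -> `|y h| <= eta.
Proof.
move=> he; case: hy => _ [j [l [d [hd H]]]].
exists j, l, (d * eta); split; first exact: mulr_gt0.
move=> h fh sh.
have hb : `|eta^-1| * (d * eta) <= d.
  rewrite ger0_norm; last by rewrite invr_ge0 ltW.
  by rewrite mulrCA mulVf ?gt_eqF // mulr1.
have := H _ (FV_scale eta^-1 h fh) (sle_mono _ _ _ _ _ (sle_scale j l eta^-1 h _ fh sh) hb).
rewrite (dual_scale _ h fh) normrM => H1.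
rewrite ger0_norm in H1; last by rewrite invr_ge0 ltW.
have -> : `|y h| = eta * (eta^-1 * `|y h|) by rewrite mulrA divff ?gt_eqF // mul1r.
by rewrite -[X in _ <= X]mulr1 ler_wpM2l // ltW.
Qed.

Lemma open_gt (r : K) : open_FV emb domK TK Ml M0 nu [set f | FVK f /\ r < `|y f|].
Proof.
split => [f [] //|f0 [hf0 hr]].
have he : 0 < (`|y f0| - r) / 2 by rewrite divr_gt0 // subr_gt0.
have [j [l [d [hd H]]]] := dual_cont _ he.
exists j, l, d; split => // g hg sg; split => //.
have := H _ (FV_sub f0 g hf0 hg) sg; rewrite (dual_sub f0 g hf0 hg) => h1.
have h2 := lerB_dist (y f0) (y g).
rewrite distrC in h2.
have h3 := le_trans h2 h1.
have h4 : `|y f0| - (`|y f0| - r) / 2 <= `|y g|.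
  by rewrite lerBlDr addrC -lerBlDr.
apply: lt_le_trans h4.
have -> : `|y f0| - (`|y f0| - r) / 2 = r + (`|y f0| - r) / 2 by field.
by rewrite ltrDl.
Qed.

Lemma open_lt (r : K) : open_FV emb domK TK Ml M0 nu [set f | FVK f /\ `|y f| < r].
Proof.
split => [f [] //|f0 [hf0 hr]].
have he : 0 < (r - `|y f0|) / 2 by rewrite divr_gt0 // subr_gt0.
have [j [l [d [hd H]]]] := dual_cont _ he.
exists j, l, d; split => // g hg sg; split => //.
have := H _ (FV_sub f0 g hf0 hg) sg; rewrite (dual_sub f0 g hf0 hg) => h1.
have h2 := lerB_dist (y g) (y f0).
have h3 := le_trans h2 h1.
have h4 : `|y g| <= `|y f0| + (r - `|y f0|) / 2.
  by rewrite -lerBlDl.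
apply: le_lt_trans h4 _.
have -> : `|y f0| + (r - `|y f0|) / 2 = r - (r - `|y f0|) / 2 by field.
by rewrite ltrBlDr ltrDl.
Qed.

End Dual.
End FS.


Section FS2.
Context {K : numFieldType} {Om M : Type} {om : M -> Type} {emb : forall m, Om -> om m}
  {domK : M -> set (Om -> K^o)} {TK : forall m, (Om -> K^o) -> om m -> K^o}.
Hypothesis linK : linear_ops domK TK.
Context {J L : Type} {Ml : L -> set M} {M0 : set M} {nu : J -> L -> M -> Om -> K}.
Hypothesis nu_ge0 : forall j l m x, Ml l m -> 0 <= nu j l m x.

Local Notation FVK := (FVs emb domK TK Ml M0 nu).
Local Notation sl := (sle emb TK Ml nu).

Definition scaleset (c : K) (C : set (Om -> K^o)) : set (Om -> K^o) :=
  [set g | exists f, C f /\ g = (fun x => c * f x)].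

Lemma compact_scale (C : set (Om -> K^o)) (c : K) : c != 0 ->
  compact_FV emb domK TK Ml M0 nu C ->
  compact_FV emb domK TK Ml M0 nu (scaleset c C).
Proof.
move=> hc [CF Ccov]; split.
  by move=> g [f [hf ->]]; exact: (FV_scale linK nu_ge0 c f (CF f hf)).
move=> Os Oopen Ccover.
pose Os' := [set O' | exists O, Os O /\ O' = [set f | FVK f /\ O (fun x => c * f x)]].
have op' : forall O', Os' O' -> open_FV emb domK TK Ml M0 nu O'.
  move=> _ [O [hO ->]]; split; first by move=> f [].
  move=> f [hf hOf]; have [_ Hop] := Oopen O hO.
  have [j [l [d [hd H]]]] := Hop _ hOf.
  have hcn : 0 < `|c| by rewrite normr_gt0.
  exists j, l, (d / `|c|); split; first by rewrite divr_gt0.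
  move=> g hg sg; split => //; apply: H.
    exact: (FV_scale linK nu_ge0 c g hg).
  have -> : (fun x => c * g x - c * f x) = (fun x => c * (g x - f x)).
    by apply: funext => x; rewrite mulrBr.
  have := sle_scale linK nu_ge0 j l c _ _ (FV_sub linK nu_ge0 f g hf hg) sg.
  by rewrite mulrCA divff ?gt_eqF // mulr1.
have cov' : C `<=` \bigcup_(O in Os') O.
  move=> f hf.
  have [O hO hOf] : (\bigcup_(O in Os) O) (fun x => c * f x).
    by apply: Ccover; exists f.
  exists [set f | FVK f /\ O (fun x => c * f x)] => //.
    by exists O.
  by split => //; apply: CF.
have [s' [hs' hcov]] := Ccov Os' op' cov'.
have back : forall s0 : seq (set (Om -> K^o)), (forall O', List.In O' s0 -> Os' O') ->
    exists s, (forall O, List.In O s -> Os O) /\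
      forall f, (exists O', List.In O' s0 /\ O' f) ->
        exists O, List.In O s /\ O (fun x => c * f x).
  elim => [|O' s0 IH] hs0.
    by exists nil; split => // f [O' []].
  have [s [hs hf]] := IH (fun O h => hs0 O (or_intror h)).
  have [O [hO EO]] := hs0 O' (or_introl erefl).
  exists (O :: s); split.
    by move=> O2 hin; case: (List.in_inv hin) => [<-|h]; [exact: hO|exact: hs].
  move=> f [O2 [hin hO2]]; case: (List.in_inv hin) => [E|h].
    by exists O; split; [left|rewrite -E EO in hO2; case: hO2].
  have [O3 [h3 h3f]] := hf f (ex_intro _ O2 (conj h hO2)).
  by exists O3; split; [right|].
have [s [hs hsf]] := back s' hs'.
exists s; split => // g [f [hf ->]].
exact: hsf (hcov f hf).
Qed.

End FS2.

Lemma absconvex_scale (K : numFieldType) (Om : Type) (C : set (Om -> K^o)) (c : K) :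
  absconvex C -> absconvex (scaleset c C).
Proof.
move=> hC a b g1 g2 hab [f1 [h1 ->]] [f2 [h2 ->]].
exists (fun x => a * f1 x + b * f2 x); split; first exact: hC.
by apply: funext => x; rewrite mulrDr [a * _]mulrCA [b * _]mulrCA.
Qed.


Section HB.
Variables (R : realType) (K : numFieldType) (k : KRax R K) (Om : Type).
Local Notation rK := (rK k).
Local Notation X := (Om -> K^o).
Definition addX (f g : X) : X := fun x => f x + g x.
Definition scX (r : R) (f : X) : X := fun x => rK r * f x.

Lemma rKV r : rK r^-1 = (rK r)^-1.
Proof.
have [->|hr] := eqVneq r 0; first by rewrite invr0 rK0 invr0.
have h : rK r != 0 by rewrite -(rK0 k) (inj_eq (@rK_inj _ _ k)).
by apply: (mulfI h); rewrite -rKM divff // divff // rK1.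
Qed.

Variables (W : set X) (Y t p : X -> R).
Hypothesis W0 : W (fun _ => 0).
Hypothesis Wadd : forall f g, W f -> W g -> W (addX f g).
Hypothesis Wsc : forall r f, W f -> W (scX r f).
Hypothesis Yadd : forall f g, W f -> W g -> Y (addX f g) = Y f + Y g.
Hypothesis Ysc : forall r f, W f -> Y (scX r f) = r * Y f.
Hypothesis tadd : forall f g, W f -> W g -> t (addX f g) = t f + t g.
Hypothesis tsc : forall r f, W f -> t (scX r f) = r * t f.
Hypothesis padd : forall f g, W f -> W g -> p (addX f g) <= p f + p g.
Hypothesis psc : forall r f, W f -> p (scX r f) = `|r| * p f.

Lemma lin0 (Z : X -> R) : (forall r f, W f -> Z (scX r f) = r * Z f) -> Z (fun _ => 0) = 0.
Proof.
move=> h; have := h 0 _ W0.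
have -> : scX 0 (fun _ => 0) = (fun _ => 0) by apply: funext => x; rewrite /scX mulr0.
by rewrite mul0r.
Qed.

Lemma hb_step : (forall f, W f -> t f = 0 -> Y f <= p f) ->
  exists c, forall f, W f -> Y f - c * t f <= p f.
Proof.
move=> hker.
case: (pselect (exists f1, W f1 /\ t f1 != 0)) => [[f1 [w1 nz]]|none]; last first.
  exists 0 => f wf; rewrite mul0r subr0; apply: hker => //.
  by case: (t f =P 0) => // /eqP hne; exfalso; apply: none; exists f.
pose e := scX (t f1)^-1 f1.
have we : W e by exact: Wsc.
have te : t e = 1 by rewrite /e tsc // mulVf.
clearbody e.
pose Z := [set f | W f /\ t f = 0].
have Z0 : Z (fun _ => 0) by split => //; exact: lin0.
pose S := [set v | exists m, Z m /\ v = Y m - p (addX m (scX (-1) e))].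
have bnd : forall m n, Z m -> Z n -> Y m - p (addX m (scX (-1) e)) <= p (addX n e) - Y n.
  move=> m n [wm tm] [wn tn].
  have wmn := Wadd m n wm wn.
  have h1 : Y m + Y n <= p (addX m n).
    rewrite -(Yadd m n wm wn); apply: hker wmn _.
    by rewrite (tadd m n wm wn) tm tn addr0.
  have E : addX m n = addX (addX m (scX (-1) e)) (addX n e).
    apply: funext => x; rewrite /addX /scX rKN rK1; ring.
  have h2 : p (addX m n) <= p (addX m (scX (-1) e)) + p (addX n e).
    rewrite E; apply: padd.
      exact: Wadd _ _ wm (Wsc _ _ we).
    exact: Wadd _ _ wn we.
  have := le_trans h1 h2.
  lra.
have Sne : S !=set0.
  by exists (Y (fun _ => 0) - p (addX (fun _ => 0) (scX (-1) e))); exists (fun _ => 0).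
have Sub : has_ubound S.
  exists (p (addX (fun _ => 0) e) - Y (fun _ => 0)) => v [m [zm ->]].
  exact: bnd m _ zm Z0.
pose lam := sup S.
have lam_ub : forall n, Z n -> lam <= p (addX n e) - Y n.
  move=> n zn; apply: ge_sup Sne _ => v [m [zm ->]]; exact: bnd m n zm zn.
have lam_lb : forall m, Z m -> Y m - p (addX m (scX (-1) e)) <= lam.
  by move=> m zm; apply: (ub_le_sup Sub); exists m.
exists (Y e - lam) => f wf.
set a := t f.
pose n := addX f (scX (-a) e).
have wn : W n by exact: Wadd _ _ wf (Wsc _ _ we).
have tn : t n = 0.
  by rewrite /n (tadd _ _ wf (Wsc _ _ we)) (tsc _ _ we) te mulr1 addrN.
have Yn : Y n = Y f - a * Y e.
  by rewrite /n (Yadd _ _ wf (Wsc _ _ we)) (Ysc _ _ we) mulNr.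
have rKa : rK a != 0 -> True by [].
case: (ltrgtP a 0) => ha.
- pose s := - a.
  have sgt0 : 0 < s by rewrite /s oppr_gt0.
  have rKs : rK s != 0 by rewrite -(rK0 k) (inj_eq (@rK_inj _ _ k)) gt_eqF.
  pose m := scX s^-1 n.
  have zm : Z m by split; [exact: Wsc|rewrite /m tsc // tn mulr0].
  have h := lam_lb m zm.
  have E1 : scX s (addX m (scX (-1) e)) = f.
    apply: funext => x; rewrite /scX /addX /m /n /scX /addX.
    rewrite /s !rKV !rKN rK1; field.
    by rewrite -(rK0 k) (inj_eq (@rK_inj _ _ k)) lt_eqF.
  have hp : p f = s * p (addX m (scX (-1) e)).
    by rewrite -{1}E1 psc ?gtr0_norm //; apply: Wadd; [exact: zm.1|exact: Wsc].
  have Ym : Y m = s^-1 * Y n by rewrite /m Ysc.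
  rewrite Ym in h.
  have h' := ler_wpM2l (ltW sgt0) h.
  rewrite mulrBr mulrA divff ?gt_eqF // mul1r -hp in h'.
  have ea : a = - s by rewrite /s opprK.
  rewrite ea in Yn *.
  lra.
- pose m := scX a^-1 n.
  have rKa' : rK a != 0 by rewrite -(rK0 k) (inj_eq (@rK_inj _ _ k)) gt_eqF.
  have zm : Z m by split; [exact: Wsc|rewrite /m tsc // tn mulr0].
  have h := lam_ub m zm.
  have E2 : scX a (addX m e) = f.
    apply: funext => x; rewrite /scX /addX /m /n /scX /addX.
    rewrite !rKV !rKN; field.
    by rewrite -(rK0 k) (inj_eq (@rK_inj _ _ k)) gt_eqF.
  have hp : p f = a * p (addX m e).
    by rewrite -{1}E2 psc ?gtr0_norm //; apply: Wadd; [exact: zm.1|].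
  have Ym : Y m = a^-1 * Y n by rewrite /m Ysc.
  rewrite Ym in h.
  have h' := ler_wpM2l (ltW ha) h.
  rewrite mulrBr mulrA divff ?gt_eqF // mul1r -hp in h'.
  lra.
- rewrite ha mulr0 subr0; apply: hker => //.
Qed.
End HB.
Arguments addX {K Om}.
Arguments scX {R K} k {Om}.
Arguments hb_step {R K} k {Om W Y t p}.

Section HBL.
Variables (R : realType) (K : numFieldType) (k : KRax R K) (Om : Type) (I : Type).
Local Notation X := (Om -> K^o).
Variables (t : I -> X -> R) (V : set X) (p : X -> R).
Hypothesis V0 : V (fun _ => 0).
Hypothesis Vadd : forall f g, V f -> V g -> V (addX f g).
Hypothesis Vsc : forall r f, V f -> V (scX k r f).
Hypothesis tadd : forall i f g, V f -> V g -> t i (addX f g) = t i f + t i g.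
Hypothesis tsc : forall i r f, V f -> t i (scX k r f) = r * t i f.
Hypothesis padd : forall f g, V f -> V g -> p (addX f g) <= p f + p g.
Hypothesis psc : forall r f, V f -> p (scX k r f) = `|r| * p f.

Lemma hb_list (ts : seq I) : forall Y : X -> R,
  (forall f g, V f -> V g -> Y (addX f g) = Y f + Y g) ->
  (forall r f, V f -> Y (scX k r f) = r * Y f) ->
  (forall f, V f -> (forall i, List.In i ts -> t i f = 0) -> Y f <= p f) ->
  exists cs : seq (R * I), (forall ci, List.In ci cs -> List.In ci.2 ts) /\
    forall f, V f -> Y f - \sum_(ci <- cs) ci.1 * t ci.2 f <= p f.
Proof.
elim: ts => [|i ts IH] Y Yadd Ysc hker.
  exists nil; split => // f vf; rewrite big_nil subr0; exact: hker.
pose W := [set f | V f /\ forall j, List.In j ts -> t j f = 0].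
have W0 : W (fun _ => 0).
  split => // j _.
  have := tsc j 0 _ V0.
  have -> : scX k 0 (fun _ : Om => 0 : K^o) = (fun _ : Om => 0 : K^o) by apply: funext => x; rewrite /scX mulr0.
  by rewrite mul0r.
have Wadd : forall f g, W f -> W g -> W (addX f g).
  move=> f g [vf hf] [vg hg]; split; first exact: Vadd.
  by move=> j hj; rewrite tadd // hf // hg // addr0.
have Wsc : forall r f, W f -> W (scX k r f).
  move=> r f [vf hf]; split; first exact: Vsc.
  by move=> j hj; rewrite tsc // hf // mulr0.
have [c hc] := hb_step k (W := W) (Y := Y) (t := t i) (p := p) W0 Wadd Wsc
  (fun f g wf wg => Yadd f g wf.1 wg.1) (fun r f wf => Ysc r f wf.1)
  (fun f g wf wg => tadd i f g wf.1 wg.1) (fun r f wf => tsc i r f wf.1)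
  (fun f g wf wg => padd f g wf.1 wg.1) (fun r f wf => psc r f wf.1)
  (fun f wf ti => hker f wf.1 (fun j hj => match hj with
                                  | or_introl e => ltac:(rewrite -e; exact ti)
                                  | or_intror h => wf.2 j h end)).
pose Y' := fun f => Y f - c * t i f.
have [cs [hcs H]] := IH Y'
  (fun f g vf vg => ltac:(rewrite /Y' Yadd // tadd //; ring))
  (fun r f vf => ltac:(rewrite /Y' Ysc // tsc //; ring))
  (fun f vf hf => hc f (conj vf hf)).
exists ((c, i) :: cs); split.
  by move=> ci [<-|h]; [left|right; exact: hcs].
move=> f vf; rewrite big_cons /=.
have := H f vf; rewrite /Y'.
by rewrite opprD addrA.
Qed.
End HBL.


Section Main.
Variables (R : realType) (K : numFieldType) (k : KRax R K).
Variables (E : lmodType K) (A : Type) (p : A -> E -> K)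
  (B : nat -> set (E -> K))
  (Om M : Type) (om : M -> Type) (emb : forall m : M, Om -> om m)
  (domE : M -> set (Om -> E)) (TE : forall m : M, (Om -> E) -> om m -> E)
  (domK : M -> set (Om -> K^o))
  (TK : forall m : M, (Om -> K^o) -> om m -> K^o)
  (MV M0V : set M) (nuV : M -> Om -> K)
  (JW LW : Type) (MlW : LW -> set M) (M0W : set M)
  (nuW : JW -> LW -> M -> Om -> K)
  (U : set {m : M & om m}).
Hypothesis hfr : frechet p.
Hypothesis hfix : fixes_topology p B.
Hypothesis hOm : inhabited Om.
Hypothesis linK : linear_ops domK TK.
Hypothesis wV : weights_ok emb (fun _ : unit => MV) M0V (fun _ _ : unit => nuV).
Hypothesis wW : weights_ok emb MlW M0W nuW.
Hypothesis hcons : consistent_for emb p domE TE domK TK MlW M0W nuW.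
Hypothesis hban : banach_FV emb domK TK (fun _ : unit => MV) M0V (fun _ _ : unit => nuV) tt tt.
Hypothesis hcomp : compact_FV emb domK TK MlW M0W nuW (ballV emb domK TK MV M0V nuV).
Hypothesis huniq : uniqueness_set emb domK TK (fun _ : unit => MV) M0V (fun _ _ : unit => nuV) U.
Variable g : {m : M & om m} -> E.
Hypothesis hg : FVG_sb emb domK TK MV M0V nuV U (span_union B) B g.

Local Notation rK := (rK k).
Local Notation reK := (reK k).
Local Notation X := (Om -> K^o).
Local Notation FV1 := (FV1 emb domK TK MV M0V nuV).
Local Notation FW := (FVs emb domK TK MlW M0W nuW).
Local Notation nV := (normV_le emb TK MV nuV).
Local Notation bV := (ballV emb domK TK MV M0V nuV).
Local Notation dualW := (in_FVdual emb domK TK MlW M0W nuW).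
Local Notation dualV := (in_FVdual emb domK TK (fun _ : unit => MV) M0V (fun _ _ : unit => nuV)).

Lemma nuV_ge0 : forall (j l : unit) m x, MV m -> 0 <= nuV m x.
Proof. by case: wV => _ _ h _ _ j l m x hm; exact: (h j l m x hm). Qed.

Lemma nuW_ge0 : forall j l m x, MlW l m -> 0 <= nuW j l m x.
Proof. by case: wW. Qed.

Definition Tk (kk : {m : M & om m}) (f : X) : K := @TK (projT1 kk) f (projT2 kk).

Lemma MV_ne : exists m, MV m.
Proof. by case: wV => _ h _ _ _; exact: h tt. Qed.

Lemma nV_ge0 f C : nV f C -> 0 <= C.
Proof.
move=> h; have [m hm] := MV_ne; case: hOm => x.
apply: le_trans (h m x hm).
by apply: mulr_ge0; [exact: normr_ge0|exact: nuV_ge0 tt tt m x hm].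
Qed.

Lemma FV1_bound f : FV1 f -> exists C, nV f C.
Proof. by case=> _ _ h; have [C hC] := h tt tt tt; exists C. Qed.

Lemma bV_FV1 f : bV f -> FV1 f.
Proof. by case. Qed.

Lemma bV_FW f : bV f -> FW f.
Proof. by move=> h; apply: hcomp.1. Qed.

Lemma scale_back (c : K) (f : X) : c != 0 -> f = (fun x => c * (c^-1 * f x)).
Proof. by move=> hc; apply: funext => x; rewrite mulrA divff // mul1r. Qed.

Lemma nV_ball f C c : FV1 f -> nV f C -> 0 < c -> C <= c -> bV (fun x => c^-1 * f x).
Proof.
move=> hf hC hc hCc; split.
  exact: (FV_scale linK nuV_ge0 c^-1 f hf).
apply: (sle_mono tt tt _ (`|c^-1| * C)).
  exact: (sle_scale linK nuV_ge0 tt tt c^-1 f C hf hC).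
rewrite ger0_norm; last by rewrite invr_ge0 ltW.
by rewrite mulrC ler_pdivrMr // mul1r.
Qed.

Lemma FV1_FW f : FV1 f -> FW f.
Proof.
move=> hf; have [C hC] := FV1_bound f hf.
have hC0 := nV_ge0 f C hC.
have hc : 0 < C + 1 by rewrite ltr_wpDl.
have hb := nV_ball f C (C + 1) hf hC hc (ltW (ltac:(by rewrite ltrDl ltr01) : C < C + 1)).
rewrite (scale_back (C + 1) f (lt0r_neq0 hc)).
exact: (FV_scale linK nuW_ge0 (C + 1) _ (bV_FW _ hb)).
Qed.


Lemma seminorm0 a : p a 0 = 0.
Proof.
case: hfr => hs _ _ _ _; case: (hs a) => _ _ h.
by have := h 0 0; rewrite scale0r normr0 mul0r.
Qed.

Lemma eps0 : eps_prod emb domK TK MlW M0W nuW p (fun _ => 0).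
Proof.
split; first by move=> c y1 y2 _ _; rewrite scaler0 addr0.
move=> a; exists set0; split.
- split; first by [].
  by move=> Os _ _; exists nil; split.
- by move=> a1 b1 f1 g1 _ [].
- by move=> y _ _; rewrite seminorm0 ler01.
Qed.

Lemma T_dualW m x : dualW (fun f => @TK m f x).
Proof. by have [_ h _] := hcons _ eps0 m x. Qed.

Lemma Tk_dualW kk : dualW (Tk kk).
Proof. exact: T_dualW. Qed.

Lemma Tk_dualV kk : U kk -> dualV (Tk kk).
Proof. by case: kk => m x hU; exact: huniq.1 m x hU. Qed.

Definition Sv (f : X) : set R :=
  [set r | exists m x, MV m /\ r = reK (`|@TK m f (emb m x)| * nuV m x)].
Definition pV (f : X) : R := sup (Sv f).

Lemma val_ge0 f m x : MV m -> 0 <= `|@TK m f (emb m x)| * nuV m x.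
Proof. by move=> hm; apply: mulr_ge0; [exact: normr_ge0|exact: nuV_ge0 tt tt m x hm]. Qed.

Lemma reK_le (z w : K) : z \is Num.real -> w \is Num.real -> z <= w -> reK z <= reK w.
Proof. by move=> hz hw hzw; rewrite -(real_leKr k _ hz) (reK_real k hw). Qed.

Lemma Sv_ne f : Sv f !=set0.
Proof. by have [m hm] := MV_ne; case: hOm => x; exists (reK (`|@TK m f (emb m x)| * nuV m x)); exists m, x. Qed.

Lemma Sv_ub f : FV1 f -> has_ubound (Sv f).
Proof.
move=> hf; have [C hC] := FV1_bound f hf.
exists (reK C) => v [m [x [hm ->]]].
apply: reK_le; [exact: ger0_real (val_ge0 f m x hm)|exact: ger0_real (nV_ge0 f C hC)|].
exact: hC m x hm.
Qed.

Lemma pV_le f r : FV1 f -> (pV f <= r <-> nV f (rK r)).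
Proof.
move=> hf; split.
- move=> hp m x hm; rewrite /absK (real_leKr k _ (ger0_real (val_ge0 f m x hm))).
  apply: le_trans hp; apply: (ub_le_sup (Sv_ub f hf)); exists m, x; split => //.
- move=> hn; apply: ge_sup (Sv_ne f) _ => v [m [x [hm ->]]].
  rewrite -(real_leKr k _ (ger0_real (val_ge0 f m x hm))); exact: hn m x hm.
Qed.

Lemma pV_ge0 f : FV1 f -> 0 <= pV f.
Proof.
move=> hf; have [m hm] := MV_ne; case: hOm => x.
have h1 := reK_ge0 k (val_ge0 f m x hm).
have h2 := ub_le_sup (Sv_ub f hf) (ex_intro _ m (ex_intro _ x (conj hm erefl))).
exact: le_trans h1 h2.
Qed.

Lemma pV_nV f : FV1 f -> nV f (rK (pV f)).
Proof. by move=> hf; apply/(pV_le f _ hf). Qed.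

Lemma pV_add f h : FV1 f -> FV1 h -> pV (addX f h) <= pV f + pV h.
Proof.
move=> hf hh; apply/(pV_le _ _ (FV_add linK nuV_ge0 f h hf hh)); rewrite rKD.
exact: (sle_add linK nuV_ge0 tt tt f h _ _ hf hh (pV_nV f hf) (pV_nV h hh)).
Qed.

Lemma pV_sc_le r f : FV1 f -> pV (scX k r f) <= `|r| * pV f.
Proof.
move=> hf; apply/(pV_le _ _ (FV_scale linK nuV_ge0 (rK r) f hf)).
rewrite rKM -normrK.
exact: (sle_scale linK nuV_ge0 tt tt (rK r) f _ hf (pV_nV f hf)).
Qed.

Lemma pV_sc r f : FV1 f -> pV (scX k r f) = `|r| * pV f.
Proof.
move=> hf; apply/le_anti; rewrite pV_sc_le //=.
have [->|hr] := eqVneq r 0; first by rewrite normr0 mul0r pV_ge0 //; exact: (FV_scale linK nuV_ge0 (rK 0) f hf).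
have Ef : scX k r^-1 (scX k r f) = f.
  apply: funext => x; rewrite /scX mulrA -rKM mulVf // rK1 mul1r //.
have h := pV_sc_le r^-1 (scX k r f) (FV_scale linK nuV_ge0 (rK r) f hf).
rewrite Ef normrV ?unitfE // in h.
rewrite -(ler_pM2l (_ : 0 < `|r|^-1)) ?invr_gt0 ?normr_gt0 //.
by rewrite mulrA mulVf ?normr_eq0 // mul1r.
Qed.


Definition dval (ds : seq (K * {m : M & om m})) (f : X) : K :=
  \sum_(ck <- ds) ck.1 * Tk ck.2 f.

Lemma dval_scale ds (c : K) f : FW f -> dval ds (fun x => c * f x) = c * dval ds f.
Proof.
move=> hf; elim: ds => [|ck ds IH]; first by rewrite /dval !big_nil mulr0.
rewrite /dval !big_cons -/(dval ds _) IH.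
by rewrite (dual_scale linK (Tk_dualW ck.2) c f hf) mulrDr mulrCA.
Qed.

Lemma dval_add ds f h : FW f -> FW h -> dval ds (fun x => f x + h x) = dval ds f + dval ds h.
Proof.
move=> hf hh; elim: ds => [|ck ds IH]; first by rewrite /dval !big_nil addr0.
rewrite /dval !big_cons -!/(dval ds _) IH.
by rewrite (dual_add (Tk_dualW ck.2) f h hf hh) mulrDr addrACA.
Qed.

Lemma reK_sum (I : Type) (s : seq I) (F : I -> K) :
  reK (\sum_(i <- s) F i) = \sum_(i <- s) reK (F i).
Proof.
elim: s => [|i s IH]; first by rewrite !big_nil reK0.
by rewrite !big_cons reKD IH.
Qed.

Lemma lt_of_nle (x y : K) : x \is Num.real -> y \is Num.real -> ~ (x <= y) -> y < x.
Proof. by move=> hx hy hn; rewrite (real_ltNge hy hx); apply/negP. Qed.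

Definition iKb (b : bool) : K := if b then iK k else 1.

Lemma clA (y : X -> K) (eps : K) : dualW y -> 0 < eps ->
  (forall ds, (forall ck, List.In ck ds -> U ck.2) ->
     exists f, bV f /\ eps < `|y f - dval ds f|) ->
  forall ks, (forall kk, List.In kk ks -> U kk) ->
  exists f, [/\ bV f, (forall kk, List.In kk ks -> Tk kk f = 0) & eps / 2 < `|y f|].
Proof.
move=> hy he H ks hks.
case: (pselect (exists f, [/\ bV f, (forall kk, List.In kk ks -> Tk kk f = 0) & eps / 2 < `|y f|])) => // hn.
exfalso.
have he2 : 0 < eps / 2 by rewrite divr_gt0.
have hsmall : forall f, bV f -> (forall kk, List.In kk ks -> Tk kk f = 0) -> `|y f| <= eps / 2.
  move=> f hf hk; case: (pselect (`|y f| <= eps / 2)) => // hn2.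
  exfalso; apply: hn; exists f; split => //.
  apply: lt_of_nle => //; [exact: normr_real|exact: gtr0_real].
pose I := ({m : M & om m} * bool)%type.
pose tt' := fun (i : I) (f : X) => reK (iKb i.2 * Tk i.1 f).
pose ts := (List.map (fun kk => (kk, false)) ks ++ List.map (fun kk => (kk, true)) ks)%list.
pose e2 := reK (eps / 2).
have e2ge0 : 0 <= e2 by apply: reK_ge0; exact: ltW.
pose pp := fun f => e2 * pV f.
pose Y := fun f => reK (y f).
have Tlin_add : forall kk f h, FV1 f -> FV1 h -> Tk kk (addX f h) = Tk kk f + Tk kk h.
  move=> kk f h hf hh; exact: (dual_add (Tk_dualW kk) f h (FV1_FW f hf) (FV1_FW h hh)).
have Tlin_sc : forall kk r f, FV1 f -> Tk kk (scX k r f) = rK r * Tk kk f.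
  move=> kk r f hf; exact: (dual_scale linK (Tk_dualW kk) (rK r) f (FV1_FW f hf)).
have tadd : forall i f h, FV1 f -> FV1 h -> tt' i (addX f h) = tt' i f + tt' i h.
  by move=> i f h hf hh; rewrite /tt' Tlin_add // mulrDr reKD.
have tsc : forall i r f, FV1 f -> tt' i (scX k r f) = r * tt' i f.
  by move=> i r f hf; rewrite /tt' Tlin_sc // mulrCA reKZ.
have padd : forall f h, FV1 f -> FV1 h -> pp (addX f h) <= pp f + pp h.
  by move=> f h hf hh; rewrite /pp -mulrDr; apply: ler_wpM2l => //; exact: pV_add.
have psc : forall r f, FV1 f -> pp (scX k r f) = `|r| * pp f.
  by move=> r f hf; rewrite /pp pV_sc // mulrCA.
have Yadd : forall f h, FV1 f -> FV1 h -> Y (addX f h) = Y f + Y h.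
  by move=> f h hf hh; rewrite /Y (dual_add hy f h (FV1_FW f hf) (FV1_FW h hh)) reKD.
have Ysc : forall r f, FV1 f -> Y (scX k r f) = r * Y f.
  by move=> r f hf; rewrite /Y (dual_scale linK hy (rK r) f (FV1_FW f hf)) reKZ.
have hker : forall f, FV1 f -> (forall i, List.In i ts -> tt' i f = 0) -> Y f <= pp f.
  move=> f hf hts.
  have hk : forall kk, List.In kk ks -> Tk kk f = 0.
    move=> kk hkk; apply: (@iK_ax R K k).
      have := hts (kk, false) (List.in_or_app _ _ _ (or_introl (List.in_map (fun kk => (kk, false)) ks kk hkk))).
      by rewrite /tt' /= mul1r.
    exact: hts (kk, true) (List.in_or_app _ _ _ (or_intror (List.in_map (fun kk => (kk, true)) ks kk hkk))).
  have := pV_ge0 f hf; rewrite le0r => /orP [/eqP h0|hpos].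
    have Ef : f = (fun _ => 0).
      apply: (proj1 hban f hf) => e0 he0.
      have := pV_nV f hf; rewrite h0 rK0 => h1.
      exact: (sle_mono tt tt f 0 e0 h1 (ltW he0)).
    by rewrite /Y /pp h0 mulr0 Ef (dual0 linK hy) reK0.
  pose h := scX k (pV f)^-1 f.
  have hh : FV1 h by exact: (FV_scale linK nuV_ge0 _ f hf).
  have pVh : pV h = 1.
    by rewrite /h pV_sc // ger0_norm ?invr_ge0 ?(ltW hpos) // mulVf // gt_eqF.
  have hbh : bV h.
    split => //; rewrite -(rK1 k); apply/(pV_le h 1 hh); by rewrite pVh.
  have hkh : forall kk, List.In kk ks -> Tk kk h = 0.
    by move=> kk hkk; rewrite /h Tlin_sc // hk // mulr0.
  have hs := hsmall h hbh hkh.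
  have Yh : Y h = (pV f)^-1 * Y f by rewrite /Y /h (dual_scale linK hy _ f (FV1_FW f hf)) reKZ.
  have H1 : Y h <= e2.
    apply: le_trans (reK_norm k (y h)) _.
    by apply: reK_le => //; [exact: normr_real|exact: gtr0_real].
  rewrite Yh in H1.
  have := ler_wpM2l (ltW hpos) H1.
  by rewrite mulrA divff ?gt_eqF // mul1r mulrC.
have [cs [hcs Hcs]] := hb_list R K k Om I tt' FV1 pp (FV0 linK)
  (fun f h hf hh => FV_add linK nuV_ge0 f h hf hh)
  (fun r f hf => FV_scale linK nuV_ge0 (rK r) f hf)
  tadd tsc padd psc ts Y Yadd Ysc hker.
pose F := fun ci : R * I => (iKb ci.2.2 * rK ci.1, ci.2.1).
have hds_gen : forall cs0 : seq (R * I), (forall ci, List.In ci cs0 -> List.In ci.2 ts) ->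
    forall ck, List.In ck (map F cs0) -> U ck.2.
  elim => [|ci cs0 IH] hc ck //= [E0|hin].
    have hin2 := hc ci (or_introl erefl); rewrite -E0 /F /=.
    case: (List.in_app_or _ _ _ hin2) => /List.in_map_iff [kk [E1 hkk]]; rewrite -E1 /=; exact: hks.
  by apply: IH => // ci' h'; apply: hc; right.
have dvalF_gen : forall (cs0 : seq (R * I)) f,
    reK (dval (map F cs0) f) = \sum_(ci <- cs0) ci.1 * tt' ci.2 f.
  move=> cs0 f; rewrite /dval; elim: cs0 => [|ci cs0 IH]; first by rewrite !big_nil reK0.
  rewrite /= !big_cons reKD IH /F /tt' /=.
  by rewrite [iKb _ * _]mulrC -mulrA reKZ.
pose ds := map F cs.
have hds := hds_gen cs hcs.
have dvalF : forall f, reK (dval ds f) = \sum_(ci <- cs) ci.1 * tt' ci.2 f.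
  by move=> f; exact: dvalF_gen.
have [f [hbf hlt]] := H ds hds.
have hf1 := bV_FV1 f hbf.
pose z := y f - dval ds f.
have Hz : forall f0, FV1 f0 -> reK (y f0 - dval ds f0) <= e2 * pV f0.
  by move=> f0 h0; rewrite reKB dvalF; exact: Hcs f0 h0.
have [zeta [hz1 hz]] := rot k z.
pose h := fun x => zeta * f x.
have hh : FV1 h by exact: (FV_scale linK nuV_ge0 zeta f hf1).
have hbh : bV h.
  split => //; have := sle_scale linK nuV_ge0 tt tt zeta f 1 hf1 hbf.2.
  by rewrite hz1 mulr1.
have pVh : pV h <= 1.
  apply/(pV_le h 1 hh); rewrite rK1; exact: hbh.2.
have Ezh : y h - dval ds h = zeta * z.
  rewrite /h (dual_scale linK hy zeta f (FV1_FW f hf1)) (dval_scale ds zeta f (FV1_FW f hf1)).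
  by rewrite /z mulrBr.
have H2 := Hz h hh; rewrite Ezh hz in H2.
have H3 : reK `|z| <= e2.
  apply: le_trans H2 _; rewrite -[X in _ <= X]mulr1; exact: ler_wpM2l.
have H4 : `|z| <= eps / 2.
  by rewrite -(reK_real k (gtr0_real he2)) (real_leKr k _ (normr_real z)).
have h5 : eps / 2 < eps by rewrite ltr_pdivrMr // ltr_pMr // ltr1n.
by have := lt_trans (lt_le_trans hlt H4) h5; rewrite ltxx.
Qed.



Lemma approx (y : X -> K) (eps : K) : dualW y -> 0 < eps ->
  exists ds, (forall ck, List.In ck ds -> U ck.2) /\
    forall f, bV f -> `|y f - dval ds f| <= eps.
Proof.
move=> hy he.
case: (pselect (exists ds, (forall ck, List.In ck ds -> U ck.2) /\
    forall f, bV f -> `|y f - dval ds f| <= eps)) => // hn; exfalso.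
have H : forall ds, (forall ck, List.In ck ds -> U ck.2) ->
    exists f, bV f /\ eps < `|y f - dval ds f|.
  move=> ds hds; case: (pselect (exists f, bV f /\ eps < `|y f - dval ds f|)) => // hn2.
  exfalso; apply: hn; exists ds; split => // f hf.
  case: (pselect (`|y f - dval ds f| <= eps)) => // hn3.
  exfalso; apply: hn2; exists f; split => //.
  apply: lt_of_nle => //; [exact: normr_real|exact: gtr0_real].
have CA := clA y eps hy he H.
have he2 : 0 < eps / 2 by rewrite divr_gt0.
pose Oy := [set f | FW f /\ `|y f| < eps / 2].
pose Ok := fun kk => [set f | FW f /\ 0 < `|Tk kk f|].
pose Os := [set O | (exists kk, U kk /\ O = Ok kk) \/ O = Oy].
have hop : forall O, Os O -> open_FV emb domK TK MlW M0W nuW O.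
  move=> O [[kk [_ ->]]|->].
    exact: (open_gt linK nuW_ge0 (Tk_dualW kk) 0).
  exact: (open_lt linK nuW_ge0 hy (eps / 2)).
have hcover : bV `<=` \bigcup_(O in Os) O.
  move=> f hf.
  case: (pselect (exists kk, U kk /\ Tk kk f != 0)) => [[kk [hU hne]]|hno].
    exists (Ok kk); first by left; exists kk.
    by split; [exact: bV_FW|rewrite normr_gt0].
  have Ef : f = (fun _ => 0).
    apply: (proj2 huniq f (bV_FV1 f hf)) => m x hU.
    case: (pselect (@TK m f x = 0)) => // hne; exfalso; apply: hno.
    by exists (existT _ m x); split => //; apply/eqP.
  exists Oy; first by right.
  split; first exact: bV_FW.
  by rewrite Ef (dual0 linK hy) normr0.
have [s [hs hcov]] := (proj2 hcomp) Os hop hcover.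
have extract : forall s0 : seq (set X), (forall O, List.In O s0 -> Os O) ->
    exists ks, (forall kk, List.In kk ks -> U kk) /\
      forall f, FW f -> (forall kk, List.In kk ks -> Tk kk f = 0) -> eps / 2 < `|y f| ->
        forall O, List.In O s0 -> ~ O f.
  elim => [|O s0 IH] hs0.
    by exists nil; split => // f _ _ _ O [].
  have [ks [hks Hks]] := IH (fun O' h' => hs0 O' (or_intror h')).
  case: (hs0 O (or_introl erefl)) => [[kk [hU EO]]|EO].
    exists (kk :: ks); split.
      by move=> kk' [<-|h']; [exact: hU|exact: hks].
    move=> f hf hk hy2 O' [<-|h'].
      by rewrite EO => -[_]; rewrite hk /=; [rewrite normr0 ltxx|left].
    by apply: Hks => // kk' h''; apply: hk; right.
  exists ks; split => // f hf hk hy2 O' [<-|h'].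
    by rewrite EO => -[_ hlt]; have := lt_trans hlt hy2; rewrite ltxx.
  exact: Hks.
have [ks [hks Hks]] := extract s hs.
have [f [hbf hk hy2]] := CA ks hks.
have [O [hO hOf]] := hcov f hbf.
exact: (Hks f (bV_FW f hbf) hk hy2 O hO hOf).
Qed.


Definition Pu (y : X -> K) (x : E) : Prop :=
  forall n e f, B n e -> FV1 f ->
    (forall m x', U (existT _ m x') -> @TK m f x' = e (g (existT _ m x'))) ->
    e x = y f.

Lemma B_dual n e : B n e -> in_dual p e.
Proof. by case: hfix => _ hb _ _; case: (hb n) => h _; exact: h. Qed.

Section Elin.
Variable e : E -> K.
Hypothesis he : in_dual p e.
Lemma eL c x1 x2 : e (c *: x1 + x2) = c * e x1 + e x2.
Proof. by case: he => h _; exact: h. Qed.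
Lemma e0 : e 0 = 0.
Proof.
have := eL 1 0 0; rewrite scaler0 addr0 mul1r => E2.
by apply: (@addrI _ (e 0)); rewrite addr0 -E2.
Qed.
Lemma eZ c x1 : e (c *: x1) = c * e x1.
Proof. by have := eL c x1 0; rewrite addr0 e0 addr0. Qed.
Lemma eD x1 x2 : e (x1 + x2) = e x1 + e x2.
Proof. by have := eL 1 x1 x2; rewrite scale1r mul1r. Qed.
Lemma eB x1 x2 : e (x1 - x2) = e x1 - e x2.
Proof. by rewrite eD -scaleN1r eZ mulN1r. Qed.
Lemma e_bound : exists a (C : K), 0 < C /\ forall x, `|e x| <= C * p a x.
Proof.
case: he => _ [a [C hC]]; exists a, (`|C| + 1); split.
  by rewrite ltr_wpDl.
case: hfr => hs _ _ _ _.
move=> x; have hx := hC x; have [hp0 _ _] := hs a.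
have := hp0 x; rewrite le0r => /orP [/eqP h0|hpos].
  by move: hx; rewrite h0 !mulr0.
have hr : C \is Num.real.
  have h1 : C * p a x \is Num.real by apply: ger0_real; exact: le_trans (normr_ge0 _) hx.
  have -> : C = C * p a x / p a x by rewrite mulrK // unitfE gt_eqF.
  by rewrite rpredM // rpredV gtr0_real.
apply: le_trans hx _; apply: ler_wpM2r; first exact: ltW.
by apply: le_trans (real_ler_norm hr) _; rewrite lerDl.
Qed.
End Elin.

Lemma B_G n e : B n e -> span_union B e.
Proof.
move=> hb; exists [:: (1, e)]; split.
  by move=> c [<-|[]]; exists n.
by apply: funext => x; rewrite big_seq1 mul1r.
Qed.

Lemma fe_exists n e : B n e -> exists f, FV1 f /\
  forall m x, U (existT _ m x) -> @TK m f x = e (g (existT _ m x)).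
Proof. by move=> hb; exact: (proj1 hg) e (B_G n e hb). Qed.

Lemma small0 (z : K) : (forall eta, 0 < eta -> `|z| <= eta) -> z = 0.
Proof.
move=> h; apply/eqP; case: (pselect (z == 0)) => // /negP hz; exfalso.
have hz' : 0 < `|z| by rewrite normr_gt0.
have := h (`|z| / 2) (divr_gt0 hz' (ltr0Sn _ 1)).
by rewrite ler_pdivlMr // ger_pMr // lt_geF // ltr1n.
Qed.

Lemma Sep z : (forall n e, B n e -> e z = 0) -> z = 0.
Proof.
move=> hz; case: hfr => hs _ hH _ _; apply: hH => a.
have [hp0 _ _] := hs a.
have := hp0 z; rewrite le0r => /orP [/eqP //|hpos]; exfalso.
case: hfix => _ _ _ h4.
have [n hn] := h4 a (p a z / 2) (divr_gt0 hpos (ltr0Sn _ 1)).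
have : p a z <= p a z / 2.
  apply: hn => e he; rewrite (hz n e he) normr0; exact: ler01.
by rewrite ler_pdivlMr // ger_pMr // lt_geF // ltr1n.
Qed.

Lemma Pu_uniq y x1 x2 : Pu y x1 -> Pu y x2 -> x1 = x2.
Proof.
move=> h1 h2; apply/eqP; rewrite -subr_eq0; apply/eqP; apply: Sep => n e hb.
have [f [hf hm]] := fe_exists n e hb.
by rewrite (eB e (B_dual n e hb)) (h1 n e f hb hf hm) (h2 n e f hb hf hm) subrr.
Qed.

Definition u (y : X -> K) : E :=
  match pselect (exists x, Pu y x) with
  | left h => proj1_sig (cid h)
  | right _ => 0
  end.

Lemma u_spec y : (exists x, Pu y x) -> Pu y (u y).
Proof. by rewrite /u; case: pselect => // h _; exact: proj2_sig (cid h). Qed.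

Lemma sb_bound n : exists c : K, 0 < c /\ forall e f, B n e -> FV1 f ->
  (forall m x, U (existT _ m x) -> @TK m f x = e (g (existT _ m x))) ->
  bV (fun x => c^-1 * f x).
Proof.
have [C hC] := (proj2 hg) n.
exists (`|C| + 1); split; first by rewrite ltr_wpDl.
move=> e f hb hf hm; have hn := hC e f hb hf hm.
have h0 := nV_ge0 f C hn.
apply: (nV_ball f C (`|C| + 1) hf hn); first by rewrite ltr_wpDl.
by rewrite ger0_norm // lerDl.
Qed.

Lemma bnd_approx y ds (eps c : K) f : dualW y -> 0 < c ->
  (forall h, bV h -> `|y h - dval ds h| <= eps) -> FV1 f -> bV (fun x => c^-1 * f x) ->
  `|y f - dval ds f| <= c * eps.
Proof.
move=> hy hc H hf hb.
have hfW : FW (fun x => c^-1 * f x) by exact: bV_FW.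
rewrite (scale_back c f (lt0r_neq0 hc)).
rewrite (dual_scale linK hy c _ hfW) (dval_scale ds c _ hfW) -mulrBr normrM gtr0_norm //.
by apply: ler_wpM2l; [exact: ltW|exact: H].
Qed.

Lemma small_eps (c eta : K) : 0 < c -> 0 < eta ->
  exists N, forall n, (N <= n)%N -> c * (n.+1%:R)^-1 <= eta.
Proof.
move=> hc he.
have [N hN] := K_archi k (ltW (divr_gt0 hc he)).
exists N => n hn.
rewrite -[c * _]/(c / n.+1%:R) ler_pdivrMr ?ltr0Sn // mulrC -ler_pdivrMr //.
apply: ltW; apply: lt_le_trans hN _; rewrite ler_nat; exact: leqW.
Qed.


Definition vval (ds : seq (K * {m : M & om m})) : E := \sum_(ck <- ds) ck.1 *: g ck.2.

Lemma e_dval e ds f : in_dual p e -> (forall ck, List.In ck ds -> U ck.2) ->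
  (forall m x, U (existT _ m x) -> @TK m f x = e (g (existT _ m x))) ->
  e (vval ds) = dval ds f.
Proof.
move=> he; elim: ds => [|ck ds IH] hds hm.
  by rewrite /vval /dval !big_nil (e0 e he).
rewrite /vval /dval !big_cons -/(vval ds) -/(dval ds f) (eL e he) IH //; last first.
  by move=> ck' h'; apply: hds; right.
have key : forall kk, U kk -> e (g kk) = Tk kk f.
  by case=> m x hU'; rewrite /Tk /= (hm m x hU').
by rewrite (key _ (hds ck (or_introl erefl))).
Qed.

Lemma exist_Pu y : dualW y -> exists x, Pu y x.
Proof.
move=> hy.
have hD : forall n : nat, exists ds, (forall ck, List.In ck ds -> U ck.2) /\
    forall h, bV h -> `|y h - dval ds h| <= (n.+1%:R)^-1.
  by move=> n; apply: approx => //; rewrite invr_gt0 ltr0Sn.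
have [D hDs] := choice hD.
pose v n := vval (D n).
have kb : forall n0 e f, B n0 e -> FV1 f ->
    (forall m x, U (existT _ m x) -> @TK m f x = e (g (existT _ m x))) ->
    forall c, 0 < c -> bV (fun x => c^-1 * f x) ->
    forall n, `|e (v n) - y f| <= c * (n.+1%:R)^-1.
  move=> n0 e f hb hf hm c hc hbc n.
  rewrite /v (e_dval e (D n) f (B_dual n0 e hb) (hDs n).1 hm) distrC.
  exact: (bnd_approx y (D n) _ c f hy hc (hDs n).2 hf hbc).
have cauchy : forall a (eta : K), 0 < eta -> exists N : nat, forall n l : nat,
    (N <= n)%N -> (N <= l)%N -> p a (v n - v l) <= eta.
  move=> a eta heta.
  case: hfix => _ _ _ h4.
  have [n0 hn0] := h4 a eta heta.
  have [c [hc hcb]] := sb_bound n0.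
  have [N hN] := small_eps c (1 / 2) hc (divr_gt0 ltr01 (ltr0Sn _ 1)).
  exists N => n l hn hl; apply: hn0 => e he.
  have [f [hf hm]] := fe_exists n0 e he.
  have hbc := hcb e f he hf hm.
  rewrite (eB e (B_dual n0 e he)).
  apply: le_trans (ler_distD (y f) _ _) _.
  rewrite [X in _ + X <= _]distrC.
  apply: le_trans (lerD (le_trans (kb n0 e f he hf hm c hc hbc n) (hN n hn))
                        (le_trans (kb n0 e f he hf hm c hc hbc l) (hN l hl))) _.
  by rewrite -splitr.
case: hfr => hs _ _ _ hcomplete.
have [x hx] := hcomplete v cauchy.
exists x => n0 e f hb hf hm.
apply/eqP; rewrite -subr_eq0; apply/eqP; apply: small0 => eta heta.
have [a' [C [hC hCb]]] := e_bound e (B_dual n0 e hb).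
have [c [hc hcb]] := sb_bound n0.
have hbc := hcb e f hb hf hm.
have heta2 : 0 < eta / 2 by rewrite divr_gt0 // ltr0Sn.
have [N1 hN1] := hx a' (eta / 2 / C) (divr_gt0 heta2 hC).
have [N2 hN2] := small_eps c (eta / 2) hc heta2.
pose n := maxn N1 N2.
have h1 : `|e x - e (v n)| <= eta / 2.
  rewrite distrC -(eB e (B_dual n0 e hb)).
  apply: le_trans (hCb _) _.
  have := hN1 n (leq_maxl N1 N2) => hp.
  apply: le_trans (ler_wpM2l (ltW hC) hp) _.
  by rewrite mulrC divfK // gt_eqF.
have h2 : `|e (v n) - y f| <= eta / 2.
  exact: le_trans (kb n0 e f hb hf hm c hc hbc n) (hN2 n (leq_maxr N1 N2)).
apply: le_trans (ler_distD (e (v n)) _ _) _.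
by rewrite [X in _ <= X](splitr eta); apply: lerD.
Qed.

Lemma absconvex_bV : absconvex bV.
Proof.
move=> a b f h hab [hf nf] [hh nh]; split.
  exact: (FV_comb linK nuV_ge0 a b f h hf hh).
apply: (sle_mono tt tt _ (`|a| * 1 + `|b| * 1)); last by rewrite !mulr1.
exact: (sle_comb linK nuV_ge0 tt tt a b f h 1 1 hf hh nf nh).
Qed.

Lemma eps_u : eps_prod emb domK TK MlW M0W nuW p u.
Proof.
split.
  move=> c y1 y2 h1 h2.
  have P1 := u_spec y1 (exist_Pu y1 h1).
  have P2 := u_spec y2 (exist_Pu y2 h2).
  have Pc : Pu (fun f => c * y1 f + y2 f) (c *: u y1 + u y2).
    move=> n e f hb hf hm.
    by rewrite (eL e (B_dual n e hb)) (P1 n e f hb hf hm) (P2 n e f hb hf hm).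
  apply: (Pu_uniq _ _ _ _ Pc); apply: u_spec; by exists (c *: u y1 + u y2).
move=> a; case: hfix => _ _ _ h4.
have [n0 hn0] := h4 a 1 ltr01.
have [c [hc hcb]] := sb_bound n0.
exists (scaleset c bV); split.
- exact: (compact_scale linK nuW_ge0 bV c (lt0r_neq0 hc) hcomp).
- exact: absconvex_scale absconvex_bV.
- move=> y hy hC; apply: hn0 => e he.
  have [f [hf hm]] := fe_exists n0 e he.
  rewrite (u_spec y (exist_Pu y hy) n0 e f he hf hm).
  apply: hC; exists (fun x => c^-1 * f x); split; first exact: hcb e f he hf hm.
  exact: scale_back (lt0r_neq0 hc).
Qed.

Lemma bounded_u : bounded_in_E p (u @` polar_ballV emb domK TK MV M0V nuV MlW M0W nuW).
Proof.
move=> a; case: hfix => _ _ _ h4.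
have [n0 hn0] := h4 a 1 ltr01.
have [c [hc hcb]] := sb_bound n0.
exists c => _ [y [hy hy1] <-].
case: hfr => hs _ _ _ _; have [_ _ hsc] := hs a.
have : p a (c^-1 *: u y) <= 1.
  apply: hn0 => e he.
  have [f [hf hm]] := fe_exists n0 e he.
  rewrite (eZ e (B_dual n0 e he)) (u_spec y (exist_Pu y hy) n0 e f he hf hm).
  have hbc := hcb e f he hf hm.
  have := hy1 _ hbc.
  by rewrite (dual_scale linK hy c^-1 f (FV1_FW f hf)).
rewrite hsc ger0_norm ?invr_ge0 ?(ltW hc) //.
by rewrite -(ler_pM2l hc) mulrA divff ?gt_eqF // mul1r mulr1.
Qed.

Theorem main_gen : exists u0 : (X -> K) -> E,
  [/\ eps_prod emb domK TK MlW M0W nuW p u0,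
      bounded_in_E p (u0 @` polar_ballV emb domK TK MV M0V nuV MlW M0W nuW) &
      forall m (x : om m), U (existT _ m x) -> TE m (Smap u0) x = g (existT _ m x)].
Proof.
exists u; split; [exact: eps_u|exact: bounded_u|].
move=> m x hU.
have [_ _ ->] := hcons u eps_u m x.
have P1 : Pu (fun f => @TK m f x) (g (existT _ m x)).
  by move=> n e f hb hf hm; rewrite (hm m x hU).
apply: (Pu_uniq _ _ _ _ P1); apply: u_spec; by exists (g (existT _ m x)).
Qed.

End Main.


Lemma rot_gen (K : numFieldType) (z : K) : exists zeta : K, `|zeta| = 1 /\ zeta * z = `|z|.
Proof.
have [->|hz] := eqVneq z 0; first by exists 1; rewrite normr1 mulr0 normr0.
exists (`|z| / z); split; last by rewrite divfK.
by rewrite normrM normr_id normrV ?unitfE // divff // normr_eq0.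
Qed.

Definition KR_R (R : realType) : KRax R (Kfield R true).
Proof.
refine (@KRax_ R (Kfield R true) (fun r => r) (fun z => z) 1
  _ _ _ _ _ _ _ _ _ (@rot_gen _) _); try done.
by move=> z; exact: (real_ler_norm (num_real (z : R))).
Defined.

Section KRC.
Local Open Scope complex_scope.

Definition KR_C (R : realType) : KRax R (Kfield R false).
Proof.
refine (@KRax_ R (Kfield R false) (fun r => r%:C) (fun z => complex.Re z) 'i
  _ _ _ _ _ _ _ _ _ (@rot_gen _) _).
- by move=> r s; rewrite /Kfield /= rmorphD.
- by move=> r s; rewrite /Kfield /= rmorphM.
- by rewrite /Kfield /= rmorph1.
- by move=> r s; rewrite /Kfield /= lecR.
- by move=> [a b] [c d].
- by move=> r [a b] /=; rewrite mul0r subr0.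
- by [].
- by move=> z hz; rewrite /Kfield /= RRe_real.
- move=> z; rewrite /Kfield /=.
  have h := normc_ge_Re z; rewrite lecE in h; case/andP: h => _ h.
  by apply: le_trans h; exact: ler_norm.
- move=> [a b] /= ha hb; apply/eqP; rewrite eq_complex /= ha eqxx /=.
  by move: hb; rewrite ha mul0r mul1r sub0r => /eqP; rewrite oppr_eq0.
Defined.

End KRC.

Definition KR_b (R : realType) (b : bool) : KRax R (Kfield R b) :=
  match b as b0 return KRax R (Kfield R b0) with
  | true => KR_R R
  | false => KR_C R
  end.

Theorem corollary5p6 (R : realType) (b : bool)
  (E : lmodType (Kfield R b)) (A : Type) (p : A -> E -> Kfield R b)
  (B : nat -> set (E -> Kfield R b))
  (Om M : Type) (om : M -> Type) (emb : forall m : M, Om -> om m)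
  (domE : M -> set (Om -> E)) (TE : forall m : M, (Om -> E) -> om m -> E)
  (domK : M -> set (Om -> (Kfield R b)^o))
  (TK : forall m : M, (Om -> (Kfield R b)^o) -> om m -> (Kfield R b)^o)
  (MV M0V : set M) (nuV : M -> Om -> Kfield R b)
  (JW LW : Type) (MlW : LW -> set M) (M0W : set M)
  (nuW : JW -> LW -> M -> Om -> Kfield R b)
  (U : set {m : M & om m}) :
  (* E Frechet, (B_n) fixes the topology of E *)
  frechet p ->
  fixes_topology p B ->
  (* the data of the weighted spaces *)
  inhabited Om -> (forall m, inhabited (om m)) ->
  linear_ops domE TE -> linear_ops domK TK ->
  weights_ok emb (fun _ : unit => MV) M0V (fun _ _ : unit => nuV) ->
  weights_ok emb MlW M0W nuW ->
  (* defining family for (FV, E): FV(Omega), FV(Omega,E) dom-spaces *)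
  dom_space_K emb domK TK (fun _ : unit => MV) M0V (fun _ _ : unit => nuV) ->
  wsn_directed emb p domE TE (fun _ : unit => MV) M0V (fun _ _ : unit => nuV) ->
  (* FW(Omega), FW(Omega,E) dom-spaces; strong and consistent for (FW, E) *)
  dom_space_K emb domK TK MlW M0W nuW ->
  wsn_directed emb p domE TE MlW M0W nuW ->
  strong_for emb p domE TE domK TK MlW M0W nuW ->
  consistent_for emb p domE TE domK TK MlW M0W nuW ->
  (* FV(Omega) Banach, its closed unit ball compact in FW(Omega) *)
  banach_FV emb domK TK (fun _ : unit => MV) M0V (fun _ _ : unit => nuV) tt tt ->
  compact_FV emb domK TK MlW M0W nuW (ballV emb domK TK MV M0V nuV) ->
  (* U set of uniqueness for FV(Omega) *)
  uniqueness_set emb domK TK (fun _ : unit => MV) M0V (fun _ _ : unit => nuV) U ->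
  (* surjectivity of R_{U,G} *)
  forall g : {m : M & om m} -> E,
    FVG_sb emb domK TK MV M0V nuV U (span_union B) B g ->
    exists u : ((Om -> (Kfield R b)^o) -> Kfield R b) -> E,
      [/\ eps_prod emb domK TK MlW M0W nuW p u,
          bounded_in_E p (u @` polar_ballV emb domK TK MV M0V nuV MlW M0W nuW) &
          forall m (x : om m), U (existT _ m x) ->
            TE m (Smap u) x = g (existT _ m x)].
Proof.
move=> hfr hfix hOm hom linE linK wV wW dsV dirEV dsW dirEW hstr hcons hban hcomp huniq g hg.
exact: (main_gen R (Kfield R b) (KR_b R b) E A p B Om M om emb domE TE domK TK MV M0V nuV
  JW LW MlW M0W nuW U hfr hfix hOm linK wV wW hcons hban hcomp huniq g hg).
Qed.
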